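(* Let $p\notin\{2,11\}$ be a prime with $p\equiv2\pmod3$ such that all three roots of $P(X)=X^3-X^2-X-1$ lie in $\mathbb Q_p$. For each $\lambda\in\Lambda$ let $\lambda^{1/3}$ denote the unique element of $\mathbb Z_p$ whose cube is $\lambda$. Then $\sum_{\lambda\in\Lambda}c_\lambda\lambda^{1/3}=0$.
   Context: $\Lambda$ is the set of roots of $P(X)=X^3-X^2-X-1$ (here contained in $\mathbb Z_p^\times$), and $c_\lambda=\lambda P'(\lambda)^{-1}$. Since $p\equiv2\pmod 3$, every element of $\mathbb Z_p^\times$ has exactly one cube root in $\mathbb Z_p$. *)

(* Defs.v *)
From mathcomp Require Import all_boot all_order all_algebra.
Set Implicit Arguments. Unset Strict Implicit. Unset Printing Implicit Defensive.
Import GRing.Theory.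
Local Open Scope ring_scope.

(* The ring Z_p of p-adic integers is realised as the inverse limit
   lim_n Z/p^(n+1): an element is a sequence x with x n : 'Z_(p^(n+1)),
   compatible with the reduction maps Z/p^(n+2) -> Z/p^(n+1).
   Ring operations / equalities in Z_p are levelwise. *)
Definition padic_seq (p : nat) := forall n : nat, 'Z_(p ^ n.+1).

Definition padic_coherent (p : nat) (x : padic_seq p) : Prop :=
  forall n : nat, ((x n.+1 : nat) %% p ^ n.+1)%N = (x n : nat).

Definition Ppoly (R : nzRingType) : {poly R} := 'X^3 - 'X^2 - 'X - 1.

(* Main.v *)
Require Import Defs.
From mathcomp Require Import all_boot all_order all_algebra all_fingroup all_solvable.
From mathcomp Require Import ring.
Import GRing.Theory.
Local Open Scope ring_scope.



Lemma rootPE (R : comNzRingType) (x : R) : root (Ppoly R) x -> x ^+ 3 - x ^+ 2 - x - 1 = 0.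
Proof. by rewrite /root /Ppoly !hornerE => /eqP. Qed.

Lemma derPE (R : comNzRingType) (x : R) : (Ppoly R)^`().[x] = 3%:R * x ^+ 2 - 2%:R * x - 1.
Proof. rewrite /Ppoly !derivE !hornerE /=. ring. Qed.

Definition dP {R : comUnitRingType} (x : R) : R := 3%:R * x ^+ 2 - 2%:R * x - 1.

Lemma final (R : comUnitRingType) (l1 l2 l3 : R) :
  l1 ^+ 3 - l1 ^+ 2 - l1 - 1 = 0 ->
  l2 ^+ 3 - l2 ^+ 2 - l2 - 1 = 0 ->
  l3 ^+ 3 - l3 ^+ 2 - l3 - 1 = 0 ->
  (l1 - l2) \is a GRing.unit -> (l1 - l3) \is a GRing.unit -> (l2 - l3) \is a GRing.unit ->
  (l1 + 1) * (dP l1)^-1 + (l2 + 1) * (dP l2)^-1 + (l3 + 1) * (dP l3)^-1 = 0.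
Proof.
move=> r1 r2 r3 u12 u13 u23.
pose q x y : R := x ^+ 2 + x * y + y ^+ 2 - x - y - 1.
have qE x y : x ^+ 3 - x ^+ 2 - x - 1 = 0 -> y ^+ 3 - y ^+ 2 - y - 1 = 0 ->
   (x - y) \is a GRing.unit -> q x y = 0.
  move=> rx ry uxy; apply: (mulrI uxy); rewrite mulr0.
  have -> : (x - y) * q x y = (x ^+ 3 - x ^+ 2 - x - 1) - (y ^+ 3 - y ^+ 2 - y - 1) by rewrite /q; ring.
  by rewrite rx ry subr0.
have q12 := qE _ _ r1 r2 u12.
have q13 := qE _ _ r1 r3 u13.
have q23 := qE _ _ r2 r3 u23.
have e1 : l3 = 1 - l1 - l2.
  have : (l2 - l3) * (l1 + l2 + l3 - 1) = 0.
    have -> : (l2 - l3) * (l1 + l2 + l3 - 1) = q l1 l2 - q l1 l3 by rewrite /q; ring.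
    by rewrite q12 q13 subr0.
  move/(congr1 (fun z => (l2 - l3)^-1 * z)); rewrite mulKr // mulr0 => /eqP.
  rewrite subr_eq0 => /eqP H. have -> : l3 = (l1 + l2 + l3) - l1 - l2 by ring.
  by rewrite H.
have D1 : dP l1 = (l1 - l2) * (l1 - l3).
  have : dP l1 - (l1 - l2) * (l1 - l3) = q l1 l2.
    rewrite /dP /q e1; ring.
  by rewrite q12 => /eqP; rewrite subr_eq0 => /eqP.
have D2 : dP l2 = (l2 - l1) * (l2 - l3).
  have : dP l2 - (l2 - l1) * (l2 - l3) = q l1 l2.
    rewrite /dP /q e1; ring.
  by rewrite q12 => /eqP; rewrite subr_eq0 => /eqP.
have D3 : dP l3 = (l3 - l1) * (l3 - l2).
  have : dP l3 - (l3 - l1) * (l3 - l2) = q l1 l2.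
    rewrite /dP /q e1; ring.
  by rewrite q12 => /eqP; rewrite subr_eq0 => /eqP.
have U1 : dP l1 * (dP l1)^-1 = 1 by rewrite mulrV // D1 unitrM u12 u13.
have U2 : dP l2 * (dP l2)^-1 = 1.
  by rewrite mulrV // D2 unitrM u23 -opprB unitrN u12.
have U3 : dP l3 * (dP l3)^-1 = 1.
  by rewrite mulrV // D3 unitrM -opprB unitrN u13 -opprB unitrN u23.
have uD : ((l1 - l2) * (l1 - l3) * (l2 - l3)) \is a GRing.unit by rewrite !unitrM u12 u13 u23.
apply: (mulIr uD); rewrite mul0r.
set u1 := (dP l1)^-1; set u2 := (dP l2)^-1; set u3 := (dP l3)^-1.
have -> : ((l1 + 1) * u1 + (l2 + 1) * u2 + (l3 + 1) * u3) * ((l1 - l2) * (l1 - l3) * (l2 - l3))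
  = (l1 + 1) * (l2 - l3) * ((l1 - l2) * (l1 - l3) * u1)
    - (l2 + 1) * (l1 - l3) * ((l2 - l1) * (l2 - l3) * u2)
    + (l3 + 1) * (l1 - l2) * ((l3 - l1) * (l3 - l2) * u3) by ring.
rewrite -D1 -D2 -D3 U1 U2 U3 e1; ring.
Qed.
Lemma dP_unit (R : comUnitRingType) (x : R) : x ^+ 3 - x ^+ 2 - x - 1 = 0 ->
  (44%:R : R) \is a GRing.unit -> dP x \is a GRing.unit.
Proof.
move=> rx u44.
have E : (44%:R : R) = (24%:R * x - 46%:R) * (x ^+ 3 - x ^+ 2 - x - 1)
   + (2%:R + 18%:R * x - 8%:R * x ^+ 2) * dP x by rewrite /dP; ring.
rewrite rx mulr0 add0r in E.
move: u44; rewrite E unitrM => /andP[]; done.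
Qed.

Lemma eq_roots (R : comUnitRingType) (x y pi w : R) (k : nat) :
  x ^+ 3 - x ^+ 2 - x - 1 = 0 -> y ^+ 3 - y ^+ 2 - y - 1 = 0 ->
  (44%:R : R) \is a GRing.unit -> pi ^+ k = 0 -> x - y = pi * w -> x = y.
Proof.
move=> rx ry u44 pk dE.
have ux := @dP_unit _ _ rx u44.
set d := x - y.
have H0 : d * dP x = d * (d * (2%:R * x + y - 1)).
  have : d * (dP x - d * (2%:R * x + y - 1)) = (x ^+ 3 - x ^+ 2 - x - 1) - (y ^+ 3 - y ^+ 2 - y - 1).
    rewrite /d /dP; ring.
  rewrite rx ry subr0 mulrBr => /eqP; rewrite subr_eq0 => /eqP ->. ring.
set s := (2%:R * x + y - 1) * (dP x)^-1.
have H1 : d = d * (d * s).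
  by rewrite /s mulrA mulrA -[d * d * _]mulrA -H0 -mulrA mulrV // mulr1.
have H2 : forall j, d = d * (d * s) ^+ j.
  elim=> [|j IH]; first by rewrite expr0 mulr1.
  by rewrite exprS mulrA -H1 -IH.
have dk : d ^+ k = 0 by rewrite /d dE exprMn pk mul0r.
have d0 : d = 0 by rewrite (H2 k) exprMn dk mul0r mulr0.
by apply/eqP; rewrite -subr_eq0 -/d d0.
Qed.
Lemma valZ (m a : nat) : (1 < m)%N -> nat_of_ord (a%:R : 'Z_m) = (a %% m)%N.
Proof. by move=> m1; rewrite Zp_nat /= Zp_cast. Qed.

Lemma natrZ (m : nat) (x : 'Z_m) : (nat_of_ord x)%:R = x.
Proof. exact: natr_Zp. Qed.

Lemma Zp_unitE (m : nat) (x : 'Z_m) : (1 < m)%N -> (x \is a GRing.unit) = coprime m x.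
Proof. by move=> m1; rewrite -{1}[x]natrZ unitZpE. Qed.

Lemma p44 p : prime p -> p != 2%N -> p != 11%N -> coprime p 44.
Proof.
move=> pP p2 p11; rewrite prime_coprime //; apply/negP => pd.
have : p \in primes 44 by rewrite mem_primes pP pd.
have -> : primes 44 = [:: 2; 11]%N by [].
by rewrite !inE (negPf p2) (negPf p11).
Qed.

Section Zpk.
Variables (p k : nat).
Hypothesis pP : prime p.
Let m := (p ^ k.+1)%N.
Lemma m_gt1 : (1 < m)%N.
Proof. by rewrite /m -{1}(expn0 p) ltn_exp2l // prime_gt1. Qed.

Lemma pk0 : (p%:R : 'Z_m) ^+ k.+1 = 0.
Proof. by apply: val_inj; rewrite -natrX /= valZ ?m_gt1 // modnn. Qed.

Lemma u44 : p != 2%N -> p != 11%N -> (44%:R : 'Z_m) \is a GRing.unit.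
Proof.
move=> p2 p11; rewrite unitZpE ?m_gt1 // /m coprimeXl //; exact: p44.
Qed.

Lemma resid_diff (x y : 'Z_m) : (x %% p = y %% p)%N -> exists w, x - y = p%:R * w.
Proof.
move=> e; exists ((x %/ p)%:R - (y %/ p)%:R).
move: (divn_eq x p) (divn_eq y p); set a := (x %/ p)%N; set b := (y %/ p)%N.
rewrite e; set r := (y %% p)%N => ex ey.
rewrite -[x in LHS]natrZ -[y in LHS]natrZ ex ey !natrD !natrM. ring.
Qed.

Lemma pdvdm : (p %| m)%N.
Proof. by rewrite /m dvdn_exp. Qed.

Lemma nonunit_resid (x y : 'Z_m) : ~~ ((x - y) \is a GRing.unit) -> (x %% p = y %% p)%N.
Proof.
rewrite Zp_unitE ?m_gt1 // /m coprime_pexpl // prime_coprime // negbK.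
set d := x - y => pd.
have xE : x = y + d by rewrite /d addrC subrK.
have : nat_of_ord x = ((y + d) %% m)%N.
  by rewrite {1}xE -[y in LHS]natrZ -[d in LHS]natrZ -natrD valZ ?m_gt1.
move=> ->; rewrite (modn_dvdm _ pdvdm).
by move: pd => /dvdnP[q ->]; rewrite addnC modnMDl.
Qed.

Lemma cube_inj (p3 : (p %% 3 = 2)%N) (a b : 'Z_m) :
  b \is a GRing.unit -> a ^+ 3 = b ^+ 3 -> a = b.
Proof.
move=> ub e.
set c := a / b.
have c3 : c ^+ 3 = 1 by rewrite /c exprMn exprVn e mulrV // unitrX.
have uc : c \is a GRing.unit by rewrite -(unitrX_pos _ (isT : (0 < 3)%N)) c3 unitr1.
have cop : coprime c m by rewrite coprime_sym -Zp_unitE ?m_gt1.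
have eu := Euler_exp_totient cop.
have cphi : c ^+ totient m = 1.
  apply: val_inj; rewrite -[c in LHS]natrZ -natrX /= valZ ?m_gt1 // eu.
  by rewrite Zp_cast ?m_gt1.
have ndiv : ~~ (3 %| totient m)%N.
  rewrite /m totient_pfactor // Euclid_dvdM // Euclid_dvdX //.
  apply/negP => /orP[/dvdnP[q hq]|/andP[/dvdnP[q hq] _]].
  - have : (p = q * 3 + 1)%N by rewrite -hq addn1 prednK // prime_gt0.
    by move=> hp; move: p3; rewrite hp modnMDl.
  - by move: p3; rewrite hq modnMl.
have : (c ^+ (totient m %% 3) = 1).
  by rewrite -cphi {2}(divn_eq (totient m) 3) exprD mulnC exprM c3 expr1n mul1r.
have : (totient m %% 3 < 3)%N by rewrite ltn_mod.
have : (totient m %% 3 != 0)%N by rewrite -/(dvdn 3 _).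
case: (totient m %% 3)%N => [|[|[|]]] //= _ _.
- by rewrite expr1 => c1; rewrite -(divrK ub a) -/c c1 mul1r.
- move=> c2; have c1 : c = 1 by rewrite -c3 exprS c2 mulr1.
  by rewrite -(divrK ub a) -/c c1 mul1r.
Qed.
End Zpk.
Lemma final2 (R : comUnitRingType) (l1 l2 l3 m1 m2 m3 t : R) :
  l1 ^+ 3 - l1 ^+ 2 - l1 - 1 = 0 ->
  l2 ^+ 3 - l2 ^+ 2 - l2 - 1 = 0 ->
  l3 ^+ 3 - l3 ^+ 2 - l3 - 1 = 0 ->
  (l1 - l2) \is a GRing.unit -> (l1 - l3) \is a GRing.unit -> (l2 - l3) \is a GRing.unit ->
  t \is a GRing.unit ->
  l1 ^+ 2 - l1 = t * m1 -> l2 ^+ 2 - l2 = t * m2 -> l3 ^+ 2 - l3 = t * m3 ->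
  l1 * (dP l1)^-1 * m1 + l2 * (dP l2)^-1 * m2 + l3 * (dP l3)^-1 * m3 = 0.
Proof.
move=> r1 r2 r3 u12 u13 u23 ut e1 e2 e3.
apply: (mulrI ut); rewrite mulr0.
have h x (mx : R) : x ^+ 3 - x ^+ 2 - x - 1 = 0 -> x ^+ 2 - x = t * mx -> x * (t * mx) = x + 1.
  move=> rx ex; rewrite -ex.
  have -> : x * (x ^+ 2 - x) = (x ^+ 3 - x ^+ 2 - x - 1) + (x + 1) by ring.
  by rewrite rx add0r.
have -> : t * (l1 * (dP l1)^-1 * m1 + l2 * (dP l2)^-1 * m2 + l3 * (dP l3)^-1 * m3)
  = (l1 * (t * m1)) * (dP l1)^-1 + (l2 * (t * m2)) * (dP l2)^-1 + (l3 * (t * m3)) * (dP l3)^-1 by ring.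
rewrite (h _ _ r1 e1) (h _ _ r2 e2) (h _ _ r3 e3).
exact: final.
Qed.

Lemma derPE' (R : comUnitRingType) (x : R) : (Ppoly R)^`().[x] = dP x.
Proof. exact: derPE. Qed.

Lemma coh_resid (p : nat) (x : padic_seq p) : prime p -> padic_coherent x ->
  forall n, ((x n : nat) %% p = (x 0%N : nat) %% p)%N.
Proof.
move=> pP hc; elim=> [//|n IH].
have d : (p %| p ^ n.+1)%N by rewrite dvdn_exp.
by rewrite -IH -(hc n) (modn_dvdm _ d).
Qed.

Theorem proposition15 (p : nat) (lam mu : 'I_3 -> padic_seq p) :
  prime p -> p != 2%N -> p != 11%N -> (p %% 3 = 2)%N ->
  (forall i, padic_coherent (lam i)) ->
  (forall i, padic_coherent (mu i)) ->
  (forall i n, root (Ppoly _) (lam i n)) ->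
  (forall i j : 'I_3, i != j -> exists n, lam i n != lam j n) ->
  (forall i n, mu i n ^+ 3 = lam i n) ->
  forall n : nat,
    \sum_(i < 3) lam i n * ((Ppoly _)^`()).[lam i n]^-1 * mu i n = 0.
Proof.
move=> pP p2 p11 p3 hl hm hr hd hmu n.
have rt i k : lam i k ^+ 3 - lam i k ^+ 2 - lam i k - 1 = 0 by exact: (@rootPE _ _ (hr i k)).
have ud i j : i != j -> (lam i n - lam j n) \is a GRing.unit.
  move=> ij; apply: contraT => nu.
  have r0 := @nonunit_resid _ _ pP _ _ nu.
  rewrite (@coh_resid _ _ pP (hl i)) (@coh_resid _ _ pP (hl j)) in r0.
  have [n0 hn0] := hd i j ij.
  have : ((lam i n0 : nat) %% p = (lam j n0 : nat) %% p)%N.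
    by rewrite (@coh_resid _ _ pP (hl i)) (@coh_resid _ _ pP (hl j)).
  move=> /(@resid_diff _ _ _ _) [w hw].
  by rewrite (@eq_roots _ _ _ _ _ _ (rt i n0) (rt j n0) (@u44 _ _ pP p2 p11) (@pk0 _ _ pP) hw) eqxx in hn0.
have u2 : (2%:R : 'Z_(p ^ n.+1)) \is a GRing.unit.
  by move: (@u44 _ n pP p2 p11); rewrite (_ : 44 = 2 * 22)%N // natrM unitrM => /andP[].
have ul i : lam i n \is a GRing.unit.
  apply/unitrPr; exists (lam i n ^+ 2 - lam i n - 1).
  have -> : lam i n * (lam i n ^+ 2 - lam i n - 1) = (lam i n ^+ 3 - lam i n ^+ 2 - lam i n - 1) + 1 by ring.
  by rewrite rt add0r.
have um i : mu i n \is a GRing.unit by rewrite -(unitrX_pos _ (isT : (0 < 3)%N)) hmu ul.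
pose nu i := lam i n ^+ 2 - lam i n.
have nu3 i : nu i ^+ 3 = 2%:R * lam i n.
  have -> : nu i ^+ 3 = (lam i n ^+ 3 - lam i n ^+ 2 - lam i n - 1) * (lam i n ^+ 3 - 2%:R * lam i n ^+ 2 + 2%:R * lam i n) + 2%:R * lam i n by rewrite /nu; ring.
  by rewrite rt mul0r add0r.
pose t i := nu i / mu i n.
have t3 i : t i ^+ 3 = 2%:R.
  by rewrite /t exprMn exprVn nu3 hmu mulrK.
have ut i : t i \is a GRing.unit by rewrite -(unitrX_pos _ (isT : (0 < 3)%N)) t3.
have teq i : t i = t ord0.
  apply: (@cube_inj _ _ pP p3 _ _ (ut ord0)); by rewrite !t3.
have nuE i : lam i n ^+ 2 - lam i n = t ord0 * mu i n.
  by rewrite -(teq i) /t divrK.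
rewrite !big_ord_recr big_ord0 /= add0r !derPE'.
apply: final2 => //; try exact: rt; try exact: nuE; exact: ud.
Qed.
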